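(* Let $\mathfrak s$ be a $4$-dimensional real Lie algebra admitting an abelian complex structure, and let $\mathfrak z$ be its center. Then $\mathfrak s/\mathfrak z$ is isomorphic to $\mathfrak{aff}(A)$ for some finite-dimensional real commutative associative algebra $A$ (possibly $A=0$, or with trivial multiplication).
   Context: An abelian complex structure on a real Lie algebra $\mathfrak g$ is a linear map $J$ with $J^2=-\mathrm{Id}$ and $[Jx,Jy]=[x,y]$ for all $x,y$. For a commutative associative algebra $A$, $\mathfrak{aff}(A)$ is the Lie algebra $A\oplus A$ with bracket $[(a,b),(a',b')]=(0,ab'-a'b)$. *)

(* Defs.v *)
From HB Require Import structures.
From mathcomp Require Import all_boot all_order all_algebra.
From mathcomp Require Import reals.
Set Implicit Arguments. Unset Strict Implicit. Unset Printing Implicit Defensive.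
Import Order.TTheory GRing.Theory Num.Theory.
Local Open Scope ring_scope.

Section Defs.
Variable R : realType.

Definition bilinear_op (n : nat) (f : 'rV[R]_n -> 'rV[R]_n -> 'rV[R]_n) : Prop :=
  (forall (a : R) x y z, f (a *: x + y) z = a *: f x z + f y z) /\
  (forall (a : R) x y z, f x (a *: y + z) = a *: f x y + f x z).

Definition is_lie_bracket (n : nat) (br : 'rV[R]_n -> 'rV[R]_n -> 'rV[R]_n) : Prop :=
  bilinear_op br /\
  (forall x, br x x = 0) /\
  (forall x y z, br x (br y z) + br y (br z x) + br z (br x y) = 0).

Definition abelian_complex_structure (n : nat)
    (br : 'rV[R]_n -> 'rV[R]_n -> 'rV[R]_n) (J : 'M[R]_n) : Prop :=
  J *m J = - 1%:M /\ (forall x y, br (x *m J) (y *m J) = br x y).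

Definition lie_center (n : nat) (br : 'rV[R]_n -> 'rV[R]_n -> 'rV[R]_n)
    (x : 'rV[R]_n) : Prop := forall y, br x y = 0.

Definition comm_assoc_algebra (m : nat) (mul : 'rV[R]_m -> 'rV[R]_m -> 'rV[R]_m)
    : Prop :=
  bilinear_op mul /\ (forall a b, mul a b = mul b a) /\
  (forall a b c, mul a (mul b c) = mul (mul a b) c).

(* bracket of aff(A) = A (+) A : [(a,b),(a',b')] = (0, ab' - a'b) *)
Definition aff_bracket (m : nat) (mul : 'rV[R]_m -> 'rV[R]_m -> 'rV[R]_m)
    (p q : 'rV[R]_m * 'rV[R]_m) : 'rV[R]_m * 'rV[R]_m :=
  (0, mul p.1 q.2 - mul q.1 p.2).

Definition linear_to_pair (n m : nat) (phi : 'rV[R]_n -> 'rV[R]_m * 'rV[R]_m)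
    : Prop :=
  forall (a : R) x y,
    phi (a *: x + y) = (a *: (phi x).1 + (phi y).1, a *: (phi x).2 + (phi y).2).

(* s / z(s) is isomorphic to aff(A): equivalently (first isomorphism theorem)
   there is a surjective Lie algebra morphism s -> aff(A) with kernel z(s). *)
Definition quotient_by_center_iso_aff (n : nat)
    (br : 'rV[R]_n -> 'rV[R]_n -> 'rV[R]_n) (m : nat)
    (mul : 'rV[R]_m -> 'rV[R]_m -> 'rV[R]_m) : Prop :=
  exists phi : 'rV[R]_n -> 'rV[R]_m * 'rV[R]_m,
    [/\ linear_to_pair phi,
        (forall p, exists x, phi x = p),
        (forall x, phi x = (0, 0) <-> lie_center br x) &
        (forall x y, phi (br x y) = aff_bracket mul (phi x) (phi y))].

End Defs.

(* Main.v *)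
Require Import Defs.
From mathcomp Require Import all_boot all_order all_algebra.
From mathcomp Require Import reals ring lra.
From Stdlib Require Import Classical.
Set Implicit Arguments. Unset Strict Implicit. Unset Printing Implicit Defensive.
Import Order.TTheory GRing.Theory Num.Theory.
Local Open Scope ring_scope.

Section Main.
Variable R : realType.
Local Notation V := 'rV[R]_4.
Variable br : V -> V -> V.
Hypothesis Hl : is_lie_bracket br.
Variable J : 'M[R]_4.
Hypothesis HJ : abelian_complex_structure br J.

Definition Jv (x : V) := x *m J.

Lemma brDl x y z : br (x + y) z = br x z + br y z.
Proof. case: Hl => [[H1 _] _]. have := H1 1 x y z. rewrite !scale1r. done. Qed.
Lemma brDr x y z : br x (y + z) = br x y + br x z.
Proof. case: Hl => [[_ H2] _]. have := H2 1 x y z. rewrite !scale1r. done. Qed.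
Lemma br0l z : br 0 z = 0.
Proof. by apply/(addrI (br 0 z)); rewrite -brDl !addr0. Qed.
Lemma br0r z : br z 0 = 0.
Proof. by apply/(addrI (br z 0)); rewrite -brDr !addr0. Qed.
Lemma brZl a x z : br (a *: x) z = a *: br x z.
Proof. case: Hl => [[H1 _] _]. by rewrite -[a *: x]addr0 H1 br0l addr0. Qed.
Lemma brZr a x z : br z (a *: x) = a *: br z x.
Proof. case: Hl => [[_ H2] _]. by rewrite -[a *: x]addr0 H2 br0r addr0. Qed.
Lemma brNl x z : br (- x) z = - br x z.
Proof. by rewrite -scaleN1r brZl scaleN1r. Qed.
Lemma brNr x z : br z (- x) = - br z x.
Proof. by rewrite -scaleN1r brZr scaleN1r. Qed.
Lemma brBl x y z : br (x - y) z = br x z - br y z.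
Proof. by rewrite brDl brNl. Qed.
Lemma brBr x y z : br z (x - y) = br z x - br z y.
Proof. by rewrite brDr brNr. Qed.
Lemma brxx x : br x x = 0.
Proof. by case: Hl => _ [H _]. Qed.
Lemma brC x y : br x y = - br y x.
Proof.
have := brxx (x + y); rewrite brDl !brDr !brxx add0r addr0 => /eqP.
by rewrite addr_eq0 => /eqP.
Qed.
Lemma jac x y z : br x (br y z) + br y (br z x) + br z (br x y) = 0.
Proof. by case: Hl => _ [_ H]. Qed.

Lemma JvD x y : Jv (x + y) = Jv x + Jv y.
Proof. by rewrite /Jv mulmxDl. Qed.
Lemma JvZ a x : Jv (a *: x) = a *: Jv x.
Proof. by rewrite /Jv scalemxAl. Qed.
Lemma JvN x : Jv (- x) = - Jv x.
Proof. by rewrite /Jv mulNmx. Qed.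
Lemma JvB x y : Jv (x - y) = Jv x - Jv y.
Proof. by rewrite JvD JvN. Qed.
Lemma Jv0 : Jv 0 = 0.
Proof. by rewrite /Jv mul0mx. Qed.
Lemma JJ x : Jv (Jv x) = - x.
Proof. case: HJ => H _. by rewrite /Jv -mulmxA H mulmxN mulmx1. Qed.
Lemma abel x y : br (Jv x) (Jv y) = br x y.
Proof. by case: HJ => _ H; apply: H. Qed.
Lemma F1 x y : br (Jv x) y = - br x (Jv y).
Proof. by rewrite -(abel x (Jv y)) JJ brNr opprK. Qed.

Ltac expand := rewrite ?(brDl, brDr, brNl, brNr, brBl, brBr, brZl, brZr,
   JvD, JvN, JvB, JvZ, JJ, F1, opprK, br0l, br0r, Jv0).
Ltac vco := apply/rowP => k; rewrite ?mxE.
Lemma coordE (u v : V) k : u = v -> u 0 k = v 0 k.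
Proof. by move=> ->. Qed.

Lemma jacD x y z : br x (br y z) = br (br x y) z + br y (br x z).
Proof.
have h := jac x y z. rewrite (brC z (br x y)) (brC z x) brNr in h.
apply/rowP=> k; have := coordE k h; rewrite !mxE. lra.
Qed.

Local Notation CP := (V * V)%type.
Definition cbr (c d : CP) : CP := (br c.1 d.1 - br c.2 d.2, br c.1 d.2 + br c.2 d.1).
Definition ci (c : CP) : CP := (- c.2, c.1).
Definition cJ (c : CP) : CP := (Jv c.1, Jv c.2).
Lemma peq (c d : CP) : c.1 = d.1 -> c.2 = d.2 -> c = d.
Proof. by case: c; case: d => ? ? ? ? /= -> ->. Qed.
Lemma pD1 (c d : CP) : (c + d).1 = c.1 + d.1. Proof. by []. Qed.
Lemma pD2 (c d : CP) : (c + d).2 = c.2 + d.2. Proof. by []. Qed.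
Lemma pN1 (c : CP) : (- c).1 = - c.1. Proof. by []. Qed.
Lemma pN2 (c : CP) : (- c).2 = - c.2. Proof. by []. Qed.
Lemma pZ1 a (c : CP) : (a *: c).1 = a *: c.1. Proof. by []. Qed.
Lemma pZ2 a (c : CP) : (a *: c).2 = a *: c.2. Proof. by []. Qed.
Lemma p01 : (0 : CP).1 = 0. Proof. by []. Qed.
Lemma p02 : (0 : CP).2 = 0. Proof. by []. Qed.
Ltac psimp := rewrite /cbr /ci /cJ /= ?(pD1, pD2, pN1, pN2, pZ1, pZ2, p01, p02).
Ltac pco := apply: peq; psimp; expand; vco.

Lemma cbrDl c d e : cbr (c + d) e = cbr c e + cbr d e.
Proof. by pco; lra. Qed.
Lemma cbrDr c d e : cbr e (c + d) = cbr e c + cbr e d.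
Proof. by pco; lra. Qed.
Lemma cbrNl c e : cbr (- c) e = - cbr c e.
Proof. by pco; lra. Qed.
Lemma cbrNr c e : cbr e (- c) = - cbr e c.
Proof. by pco; lra. Qed.
Lemma cbrZl a c e : cbr (a *: c) e = a *: cbr c e.
Proof. by pco; lra. Qed.
Lemma cbrZr a c e : cbr e (a *: c) = a *: cbr e c.
Proof. by pco; lra. Qed.
Lemma cbr0r e : cbr e 0 = 0.
Proof. by pco; lra. Qed.
Lemma cbr_il c d : cbr (ci c) d = ci (cbr c d).
Proof. by pco; lra. Qed.
Lemma cbr_ir c d : cbr c (ci d) = ci (cbr c d).
Proof. by pco; lra. Qed.
Lemma cbrC c d : cbr c d = - cbr d c.
Proof.
case: c => c1 c2; case: d => d1 d2.
apply: peq; psimp; rewrite ?(brC d1 c1, brC d2 c2, brC d1 c2, brC d2 c1); expand; vco; lra.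
Qed.
Lemma cjacD X Y Z : cbr X (cbr Y Z) = cbr (cbr X Y) Z + cbr Y (cbr X Z).
Proof.
case: X => x1 x2; case: Y => y1 y2; case: Z => z1 z2.
apply: peq; psimp; expand; rewrite ?(jacD x1 y1 z1, jacD x1 y1 z2, jacD x1 y2 z1, jacD x1 y2 z2,
  jacD x2 y1 z1, jacD x2 y1 z2, jacD x2 y2 z1, jacD x2 y2 z2); expand; vco; lra.
Qed.
Lemma cabel c d : cbr (cJ c) (cJ d) = cbr c d.
Proof. by psimp; rewrite !abel. Qed.
Lemma cii c : ci (ci c) = - c.
Proof. by pco; lra. Qed.
Lemma ci_neg c : ci (- c) = - ci c.
Proof. by pco; lra. Qed.

Definition isA (c : CP) := cJ c = ci c.
Definition isB (c : CP) := cJ c = - ci c.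
Definition cA (c : CP) := 2^-1 *: (c - ci (cJ c)).
Definition cB (c : CP) := 2^-1 *: (c + ci (cJ c)).
Lemma cdec c : c = cA c + cB c.
Proof. rewrite /cA /cB. by pco; lra. Qed.
Lemma cA_A c : isA (cA c).
Proof. rewrite /isA /cA. by pco; lra. Qed.
Lemma cB_B c : isB (cB c).
Proof. rewrite /isB /cB. by pco; lra. Qed.
Lemma self_neg (X : CP) : X = - X -> X = 0.
Proof.
case: X => x1 x2 /= [] h1 h2.
apply: peq => /=; apply/rowP => k; have := coordE k h1; have := coordE k h2; rewrite !mxE; lra.
Qed.
Lemma AA a a' : isA a -> isA a' -> cbr a a' = 0.
Proof.
move=> Ha Ha'; apply: self_neg.
by rewrite -{1}cabel Ha Ha' cbr_il cbr_ir cii.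
Qed.
Lemma BB b b' : isB b -> isB b' -> cbr b b' = 0.
Proof.
move=> Hb Hb'; apply: self_neg.
by rewrite -{1}cabel Hb Hb' cbrNl cbrNr opprK cbr_il cbr_ir cii.
Qed.

Lemma F1' x y : br x (Jv y) = br y (Jv x).
Proof. by rewrite brC F1 opprK. Qed.

Lemma cbr0l e : cbr 0 e = 0.
Proof. by pco; lra. Qed.

Lemma ito_c a a' b b' : isA a -> isA a' -> isB b -> isB b' ->
  cbr (cbr a b) (cbr a' b') = 0.
Proof.
move=> Ha Ha' Hb Hb'.
have S1 p p' q : isA p -> isA p' -> cbr (cbr p q) p' = cbr (cbr p' q) p.
  move=> Hp Hp'; have := cjacD p' p q; rewrite (AA Hp' Hp) cbr0l add0r => H.
  by rewrite cbrC H -cbrC.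
have S1B p q q' : isB q -> isB q' -> cbr (cbr p q) q' = cbr (cbr p q') q.
  move=> Hq Hq'; have := cjacD q' p q; rewrite (BB Hq' Hq) cbr0r addr0 => H.
  by rewrite cbrC H [cbr q' p]cbrC cbrNl opprK.
set c := cbr b a'; set d := cbr a b'.
have E1 : cbr (cbr a b) a' = cbr a (cB c).
  have := cjacD a b a'; rewrite (AA Ha Ha') cbr0r addr0 => <-.
  by rewrite /c {1}(cdec (cbr b a')) cbrDr (AA Ha (cA_A _)) add0r.
have E2 : cbr (cbr a b) b' = cbr (cA d) b.
  by rewrite S1B // /d {1}(cdec (cbr a b')) cbrDl (BB (cB_B _) Hb) addr0.
have E3 : cbr (cbr a (cB c)) b' = cbr (cA d) (cB c).
  by rewrite (S1B _ _ _ (cB_B c) Hb') -/d {1}(cdec d) cbrDl (BB (cB_B _) (cB_B _)) addr0.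
have E4 : cbr a' (cbr (cA d) b) = - cbr (cA d) (cB c).
  rewrite cbrC (S1 _ _ _ (cA_A d) Ha') [cbr a' b]cbrC -/c cbrNl opprK {1}(cdec c) cbrDl.
  by rewrite (AA (cA_A _) (cA_A _)) add0r cbrC.
by rewrite cjacD E1 E2 E3 E4 addrN.
Qed.

Lemma ito x y z w : br (br x y) (br z w) = 0.
Proof.
have hA p : isA (p, - Jv p).
  by rewrite /isA; pco; lra.
have hB p : isB (p, Jv p).
  by rewrite /isB; pco; lra.
have h1 := ito_c (hA x) (hA z) (hB y) (hB w).
have h2 := ito_c (hA x) (hA w) (hB y) (hB z).
move: h1 h2; psimp => /(congr1 fst) /= h1 /(congr1 fst) /= h2.
move: h1 h2; expand => h1 h2.
rewrite (brC w z) (F1' w z) in h2. move: h2; expand => h2.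
apply/rowP => k; move: (coordE k h1) (coordE k h2).
rewrite ?mxE => ? ?. lra.
Qed.

Definition i0 : 'I_4 := @Ordinal 4 0 isT.
Definition i1 : 'I_4 := @Ordinal 4 1 isT.
Definition i2 : 'I_4 := @Ordinal 4 2 isT.
Definition i3 : 'I_4 := @Ordinal 4 3 isT.
Definition mk4 (c0 c1 c2 c3 : R) : V := \row_(j < 4) nth 0 [:: c0; c1; c2; c3] j.
Lemma rV4E (v : V) : v = mk4 (v 0 i0) (v 0 i1) (v 0 i2) (v 0 i3).
Proof.
apply/rowP => j; rewrite mxE.
case: j => [[|[|[|[|m]]]] Hj] /=; try by congr (v 0 _); apply: val_inj.
by [].
Qed.
Lemma mk4E0 c0 c1 c2 c3 : mk4 c0 c1 c2 c3 0 i0 = c0. Proof. by rewrite mxE. Qed.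
Lemma mk4E1 c0 c1 c2 c3 : mk4 c0 c1 c2 c3 0 i1 = c1. Proof. by rewrite mxE. Qed.
Lemma mk4E2 c0 c1 c2 c3 : mk4 c0 c1 c2 c3 0 i2 = c2. Proof. by rewrite mxE. Qed.
Lemma mk4E3 c0 c1 c2 c3 : mk4 c0 c1 c2 c3 0 i3 = c3. Proof. by rewrite mxE. Qed.

Definition lin_closed (S : V -> Prop) :=
  [/\ (forall u v, S u -> S v -> S (u + v)), (forall a u, S u -> S (a *: u)) &
      (forall u, S u -> S (Jv u))].

Lemma sq0 (a b : R) : a ^+ 2 + b ^+ 2 = 0 -> a = 0 /\ b = 0.
Proof. move=> h; split; nra. Qed.

Lemma Jpair S a b v : lin_closed S -> S (a *: v + b *: Jv v) -> S ((a ^+ 2 + b ^+ 2) *: v).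
Proof.
case=> HD HZ HJ0 H.
have H2 := HJ0 _ H. rewrite JvD !JvZ JJ in H2.
have -> : (a ^+ 2 + b ^+ 2) *: v = a *: (a *: v + b *: Jv v) + (- b) *: (a *: Jv v + b *: - v).
  by vco; lra.
by apply: (HD); apply: (HZ).
Qed.

Section Basis.
Variables b0 b1 b2 b3 : V.
Definition comb (c0 c1 c2 c3 : R) := c0 *: b0 + c1 *: b1 + c2 *: b2 + c3 *: b3.
Definition indep := forall c0 c1 c2 c3, comb c0 c1 c2 c3 = 0 ->
  [/\ c0 = 0, c1 = 0, c2 = 0 & c3 = 0].
Definition BM : 'M[R]_4 := \matrix_(i < 4, j < 4) (nth 0 [:: b0; b1; b2; b3] i) 0 j.
Lemma mk4_mul c0 c1 c2 c3 : mk4 c0 c1 c2 c3 *m BM = comb c0 c1 c2 c3.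
Proof.
apply/rowP => j; rewrite /comb !mxE !big_ord_recl big_ord0 !mxE /=. lra.
Qed.
Hypothesis Hind : indep.
Lemma BM_unit : BM \in unitmx.
Proof.
rewrite -row_free_unit; apply/inj_row_free => v.
rewrite [v]rV4E mk4_mul => Hv. case: (Hind Hv) => -> -> -> ->.
by apply/rowP => j; rewrite !mxE; case: j => [[|[|[|[|m]]]] Hj].
Qed.
Definition co (t : V) : V := t *m invmx BM.
Definition g i t := co t 0 i.
Lemma decomp t : t = comb (g i0 t) (g i1 t) (g i2 t) (g i3 t).
Proof. by rewrite -mk4_mul /g -rV4E /co mulmxKV // BM_unit. Qed.
Lemma co_comb c0 c1 c2 c3 : co (comb c0 c1 c2 c3) = mk4 c0 c1 c2 c3.
Proof. by rewrite -mk4_mul /co mulmxK // BM_unit. Qed.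
Lemma gD i x y : g i (x + y) = g i x + g i y.
Proof. by rewrite /g /co mulmxDl mxE. Qed.
Lemma gZ i a x : g i (a *: x) = a * g i x.
Proof. by rewrite /g /co -scalemxAl mxE. Qed.
Lemma gN i x : g i (- x) = - g i x.
Proof. by rewrite /g /co mulNmx mxE. Qed.
Lemma g0 i : g i 0 = 0.
Proof. by rewrite /g /co mul0mx mxE. Qed.
Lemma gB i x y : g i (x - y) = g i x - g i y.
Proof. by rewrite gD gN. Qed.
Lemma g_comb0 c0 c1 c2 c3 : g i0 (comb c0 c1 c2 c3) = c0.
Proof. by rewrite /g co_comb mk4E0. Qed.
Lemma g_comb1 c0 c1 c2 c3 : g i1 (comb c0 c1 c2 c3) = c1.
Proof. by rewrite /g co_comb mk4E1. Qed.
Lemma g_comb2 c0 c1 c2 c3 : g i2 (comb c0 c1 c2 c3) = c2.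
Proof. by rewrite /g co_comb mk4E2. Qed.
Lemma g_comb3 c0 c1 c2 c3 : g i3 (comb c0 c1 c2 c3) = c3.
Proof. by rewrite /g co_comb mk4E3. Qed.
Lemma central_basis t : br t b0 = 0 -> br t b1 = 0 -> br t b2 = 0 -> br t b3 = 0 ->
  lie_center br t.
Proof.
move=> h0 h1 h2 h3 y; rewrite (decomp y) /comb !brDr !brZr h0 h1 h2 h3.
by rewrite !scaler0 !addr0.
Qed.
End Basis.

Lemma indep4 S v w : lin_closed S -> S v -> v != 0 -> ~ S w -> indep v (Jv v) w (Jv w).
Proof.
move=> HS Sv v0 Sw c0 c1 c2 c3 H.
have HS' := HS; case: HS' => HD HZ HJ0.
have E : S (c2 *: w + c3 *: Jv w).
  have -> : c2 *: w + c3 *: Jv w = (- c0) *: v + (- c1) *: Jv v.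
    move: H; rewrite /comb => /(coordE ^~ _) H; apply/rowP => k.
    by have := H k; rewrite !mxE; lra.
  by apply: (HD); apply: (HZ) => //; apply: (HJ0).
have E2 := Jpair HS E.
have [c23 | c23] := eqVneq (c2 ^+ 2 + c3 ^+ 2) 0.
  have [e2 e3] := sq0 c23.
  move: H; rewrite /comb e2 e3 !scale0r !addr0 => H.
  have Z : lin_closed (fun t : V => t = 0).
    split => [? ? -> ->|? ? ->|? ->]; by rewrite ?addr0 ?scaler0 ?Jv0.
  have := Jpair Z H => /eqP; rewrite scaler_eq0 (negbTE v0) orbF => /eqP /sq0 [-> ->].
  by [].
exfalso; apply: Sw.
have -> : w = (c2 ^+ 2 + c3 ^+ 2)^-1 *: ((c2 ^+ 2 + c3 ^+ 2) *: w).
  by rewrite scalerA mulVf // scale1r.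
by apply: (HZ).
Qed.

Definition concl := exists (m : nat) (mul : 'rV[R]_m -> 'rV[R]_m -> 'rV[R]_m),
  comm_assoc_algebra mul /\ quotient_by_center_iso_aff br mul.

Lemma peqm m (c d : 'rV[R]_m * 'rV[R]_m) : c.1 = d.1 -> c.2 = d.2 -> c = d.
Proof. by case: c; case: d => ? ? ? ? /= -> ->. Qed.

Lemma caseA : (forall x y, br x y = 0) -> concl.
Proof.
move=> H; exists 0%N, (fun _ _ => 0); split.
  split; [split=> *; by rewrite scaler0 addr0 | by split].
exists (fun _ => (0, 0)); split.
- by move=> a x y; rewrite scaler0 addr0.
- by case=> p1 p2; exists 0; rewrite [p1]thinmx0 [p2]thinmx0.
- by move=> x; split => // _ y; apply: H.
- by move=> x y; rewrite /aff_bracket subrr.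
Qed.

Definition mk1 (a : R) : 'rV[R]_1 := \row_(j < 1) a.
Lemma rV1E (v : 'rV[R]_1) : v = mk1 (v 0 0).
Proof. by apply/rowP => j; rewrite !mxE ord1. Qed.
Lemma mk1_inj a b : mk1 a = mk1 b -> a = b.
Proof. by move/rowP/(_ 0); rewrite !mxE. Qed.
Lemma mk1_0 : mk1 0 = 0.
Proof. by apply/rowP => j; rewrite !mxE. Qed.

Lemma closed_center : lin_closed (lie_center br).
Proof.
split.
- by move=> u v hu hv y; rewrite brDl hu hv addr0.
- by move=> a u hu y; rewrite brZl hu scaler0.
- by move=> u hu y; rewrite F1 hu oppr0.
Qed.

Lemma outS S v w t : lin_closed S -> S v -> ~ S w -> indep v (Jv v) w (Jv w) -> S t ->
  g v (Jv v) w (Jv w) i2 t = 0 /\ g v (Jv v) w (Jv w) i3 t = 0.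
Proof.
move=> HS Sv Sw Hind St.
have HS' := HS; case: HS' => HD HZ HJ0.
set g2 := g _ _ _ _ i2 t; set g3 := g _ _ _ _ i3 t.
have E : S (g2 *: w + g3 *: Jv w).
  have -> : g2 *: w + g3 *: Jv w =
     t + (- g v (Jv v) w (Jv w) i0 t) *: v + (- g v (Jv v) w (Jv w) i1 t) *: Jv v.
    rewrite {1}(decomp Hind t) /comb -/g2 -/g3; by vco; lra.
  by apply: (HD); [apply: (HD) => //; apply: (HZ) | apply: (HZ); apply: (HJ0)].
have [c23 | c23] := eqVneq (g2 ^+ 2 + g3 ^+ 2) 0; first exact: sq0.
exfalso; apply: Sw.
have -> : w = (g2 ^+ 2 + g3 ^+ 2)^-1 *: ((g2 ^+ 2 + g3 ^+ 2) *: w).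
  by rewrite scalerA mulVf // scale1r.
by apply: (HZ); apply: Jpair.
Qed.

Lemma caseB c x : c != 0 -> lie_center br c -> ~ lie_center br x -> concl.
Proof.
move=> c0 Hc Hx.
have Hind := indep4 closed_center Hc c0 Hx.
have Hcr y : br y c = 0 by rewrite brC Hc oppr0.
have HJc : lie_center br (Jv c) by case: closed_center => _ _ H; apply: H.
have HJcr y : br y (Jv c) = 0 by rewrite brC HJc oppr0.
set K := br x (Jv x).
have BR a0 a1 a2 a3 b0 b1 b2 b3 : br (comb c (Jv c) x (Jv x) a0 a1 a2 a3)
    (comb c (Jv c) x (Jv x) b0 b1 b2 b3) = (a2 * b3 - a3 * b2) *: K.
  rewrite /comb; expand; rewrite ?(Hc, Hcr, HJc, HJcr, brxx) /K; expand; rewrite ?brxx.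
  by vco; lra.
have BRt t t' : br t t' = ((g c (Jv c) x (Jv x)) i2 t * (g c (Jv c) x (Jv x)) i3 t' - (g c (Jv c) x (Jv x)) i3 t * (g c (Jv c) x (Jv x)) i2 t') *: K.
  by rewrite {1}(decomp Hind t) {1}(decomp Hind t') BR.
have ker t : lie_center br t <-> (g c (Jv c) x (Jv x)) i2 t = 0 /\ (g c (Jv c) x (Jv x)) i3 t = 0.
  split; first exact: outS closed_center Hc Hx Hind.
  case=> h2 h3; rewrite (decomp Hind t) h2 h3 /comb !scale0r !addr0.
  by case: closed_center => HD HZ _; apply: (HD); apply: (HZ).
set p := (g c (Jv c) x (Jv x)) i2 K; set q := (g c (Jv c) x (Jv x)) i3 K.
have [s0 | s0] := eqVneq (p ^+ 2 + q ^+ 2) 0.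
- have [p0 q0] := sq0 s0.
  exists 1%N, (fun _ _ => 0); split.
    split; [split=> *; by rewrite scaler0 addr0 | by split].
  exists (fun t => (mk1 ((g c (Jv c) x (Jv x)) i2 t), mk1 ((g c (Jv c) x (Jv x)) i3 t))); split.
  + move=> a t t'; apply: peqm => /=; apply/rowP => j; rewrite !mxE !(gD, gZ) //.
  + case=> P1 P2; exists (comb c (Jv c) x (Jv x) 0 0 (P1 0 0) (P2 0 0)).
    by rewrite (g_comb2 Hind) (g_comb3 Hind) -!rV1E.
  + move=> t; rewrite ker; split.
      by case; rewrite -mk1_0 => /mk1_inj -> /mk1_inj ->.
    by case=> -> ->; rewrite mk1_0.
  + move=> t t'; rewrite /aff_bracket BRt !gZ -/p -/q p0 q0 !mulr0 mk1_0 subrr.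
    by [].
- exists 1%N, (fun a b => mk1 (a 0 0 * b 0 0)); split.
    split; [split=> *; apply/rowP => j; rewrite !mxE; ring | split].
      by move=> a b; rewrite mulrC.
    by move=> a b d; rewrite !mxE mulrA.
  exists (fun t => (mk1 (q * (g c (Jv c) x (Jv x)) i2 t - p * (g c (Jv c) x (Jv x)) i3 t), mk1 (p * (g c (Jv c) x (Jv x)) i2 t + q * (g c (Jv c) x (Jv x)) i3 t))).
  split.
  + move=> a t t'; apply: peqm => /=; apply/rowP => j; rewrite !mxE !(gD, gZ); ring.
  + case=> P1 P2; exists (comb c (Jv c) x (Jv x) 0 0
        ((q * P1 0 0 + p * P2 0 0) / (p ^+ 2 + q ^+ 2))
        ((q * P2 0 0 - p * P1 0 0) / (p ^+ 2 + q ^+ 2))).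
    rewrite (g_comb2 Hind) (g_comb3 Hind); apply: peqm => /=; rewrite [P1]rV1E [P2]rV1E;
      congr mk1; rewrite !mxE; field; done.
  + move=> t; rewrite ker; split.
      case; rewrite -mk1_0 => /mk1_inj e1 /mk1_inj e2.
      set G2 := (g c (Jv c) x (Jv x)) i2 t; set G3 := (g c (Jv c) x (Jv x)) i3 t.
      have h2 : G2 * (p ^+ 2 + q ^+ 2) = q * (q * G2 - p * G3) + p * (p * G2 + q * G3) by ring.
      have h3 : G3 * (p ^+ 2 + q ^+ 2) = q * (p * G2 + q * G3) - p * (q * G2 - p * G3) by ring.
      rewrite e1 e2 !mulr0 ?addr0 ?subrr in h2 h3.
      by move: h2 h3 => /eqP; rewrite mulf_eq0 (negbTE s0) orbF => /eqP -> /eqP;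
        rewrite mulf_eq0 (negbTE s0) orbF => /eqP ->.
    by case=> -> ->; rewrite !mulr0 subrr addr0 mk1_0.
  + move=> t t'; rewrite /aff_bracket BRt !gZ -/p -/q; apply: peqm => /=;
      apply/rowP => j; rewrite !mxE; ring.
Qed.

Definition j0 : 'I_2 := @Ordinal 2 0 isT.
Definition j1 : 'I_2 := @Ordinal 2 1 isT.
Definition mk2 (a b : R) : 'rV[R]_2 := \row_(j < 2) nth 0 [:: a; b] j.
Lemma mk2E0 a b : mk2 a b 0 j0 = a. Proof. by rewrite mxE. Qed.
Lemma mk2E1 a b : mk2 a b 0 j1 = b. Proof. by rewrite mxE. Qed.
Lemma rV2E (v : 'rV[R]_2) : v = mk2 (v 0 j0) (v 0 j1).
Proof.
apply/rowP => j; rewrite mxE.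
case: j => [[|[|m]] Hj] /=; try by congr (v 0 _); apply: val_inj.
by [].
Qed.
Lemma mk2_0 : mk2 0 0 = 0.
Proof. by apply/rowP => j; rewrite !mxE; case: j => [[|[|m]] Hj]. Qed.
Lemma mk2_inj a b c d : mk2 a b = mk2 c d -> a = c /\ b = d.
Proof.
move=> h; split; [move: (congr1 (fun p : 'rV_2 => p 0 j0) h) | move: (congr1 (fun p : 'rV_2 => p 0 j1) h)];
  by rewrite /= !mxE.
Qed.
Lemma mk2B a b c d : mk2 a b - mk2 c d = mk2 (a - c) (b - d).
Proof. by apply/rowP => j; rewrite !mxE; case: j => [[|[|m]] Hj]; rewrite //= subrr. Qed.
Lemma mk2_lin a (p q : 'rV[R]_2) : a *: p + q = mk2 (a * p 0 j0 + q 0 j0) (a * p 0 j1 + q 0 j1).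
Proof. by rewrite [LHS]rV2E !mxE. Qed.

Definition span2 (a b : V) (t : V) := exists al be, t = al *: a + be *: b.
Lemma closed_spanJ u : lin_closed (span2 u (Jv u)).
Proof.
split.
- move=> s t [a [b ->]] [c [d ->]]; exists (a + c), (b + d); by vco; lra.
- move=> c s [a [b ->]]; exists (c * a), (c * b); by vco; lra.
- move=> s [a [b ->]]; exists (- b), a; expand; by vco; lra.
Qed.

Definition centerless := forall t, lie_center br t -> t = 0.

Lemma typeI u v : centerless -> u != 0 -> ~ span2 u (Jv u) v ->
  (exists a b, u = br a b) -> (exists a b, v = br a b) -> concl.
Proof.
move=> Hcl u0 Hv [x0 [y0 Eu]] [x1 [y1 Ev]].
have ito_u a b : br (br a b) u = 0 by rewrite Eu; apply: ito.
have ito_v a b : br (br a b) v = 0 by rewrite Ev; apply: ito.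
have huv : br u v = 0 by rewrite {1}Eu ito_v.
have hvu : br v u = 0 by rewrite {1}Ev ito_u.
have Su : span2 u (Jv u) u by exists 1, 0; rewrite scale1r scale0r addr0.
have Hind := indep4 (closed_spanJ u) Su u0 Hv.
pose gg := g u (Jv u) v (Jv v).
pose emb (p : 'rV[R]_2) := p 0 j0 *: u + p 0 j1 *: v.
have embUV p p' : br (emb p) (emb p') = 0.
  rewrite /emb; expand; rewrite brxx huv hvu brxx.
  by rewrite ?(scaler0, addr0).
have embJJ p p' : br (Jv (emb p)) (Jv (emb p')) = 0 by rewrite abel embUV.
have embL a p q : emb (a *: p + q) = a *: emb p + emb q.
  by rewrite /emb !mxE; vco; lra.
have inspan a b : gg i1 (br a b) = 0 /\ gg i3 (br a b) = 0.
  set w := br a b.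
  have Hr : lie_center br (gg i1 w *: Jv u + gg i3 w *: Jv v).
    apply: (central_basis Hind).
    - have -> : gg i1 w *: Jv u + gg i3 w *: Jv v = w - gg i0 w *: u - gg i2 w *: v.
        rewrite [X in _ = X - _ - _](decomp Hind w) /comb -/gg; by vco; lra.
      by rewrite !brBl !brZl ito_u brxx hvu !scaler0 !subr0.
    - by rewrite -!JvZ -JvD abel brDl !brZl brxx hvu !scaler0 addr0.
    - have -> : gg i1 w *: Jv u + gg i3 w *: Jv v = w - gg i0 w *: u - gg i2 w *: v.
        rewrite [X in _ = X - _ - _](decomp Hind w) /comb -/gg; by vco; lra.
      by rewrite !brBl !brZl ito_v brxx huv !scaler0 !subr0.
    - by rewrite -!JvZ -JvD abel brDl !brZl brxx huv !scaler0 addr0.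
  have := Hcl _ Hr.
  have -> : gg i1 w *: Jv u + gg i3 w *: Jv v = comb u (Jv u) v (Jv v) 0 (gg i1 w) 0 (gg i3 w).
    by rewrite /comb !scale0r add0r addr0.
  by case/Hind.
pose pr2 (w : V) := mk2 (gg i0 w) (gg i2 w).
have emb_pr2 a b : emb (pr2 (br a b)) = br a b.
  have [h1 h3] := inspan a b.
  rewrite /emb /pr2 !mk2E0 !mk2E1 {3}(decomp Hind (br a b)) /comb -/gg h1 h3.
  by rewrite !scale0r !addr0.
have pr2L a w w' : pr2 (a *: w + w') = a *: pr2 w + pr2 w'.
  by rewrite /pr2 mk2_lin !mxE /gg !(gD, gZ).
pose mul p q := pr2 (br (Jv (emb p)) (emb q)).
have emb_mul p q : emb (mul p q) = br (Jv (emb p)) (emb q) by apply: emb_pr2.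
have mulC p q : mul p q = mul q p.
  by rewrite /mul F1 brC opprK.
have brJC P Q : br (Jv P) Q = br (Jv Q) P by rewrite F1 brC opprK.
exists 2%N, mul; split.
  split; [split|split].
  - by move=> a x y z; rewrite /mul embL JvD JvZ brDl brZl pr2L.
  - by move=> a x y z; rewrite /mul embL brDr brZr pr2L.
  - exact: mulC.
  - move=> a b c; rewrite /mul !emb_pr2.
    congr pr2.
    symmetry; rewrite [LHS]F1 (brC (br (Jv (emb a)) (emb b))) opprK [LHS]jacD abel embUV br0l add0r.
    by rewrite (brJC (emb c) (emb b)).
pose phi (t : V) := (mk2 (gg i1 t) (gg i3 t), mk2 (gg i0 t) (gg i2 t)).
have tE t : t = emb (phi t).2 + Jv (emb (phi t).1).
  rewrite /phi /emb !mk2E0 !mk2E1 {1}(decomp Hind t) /comb -/gg; expand; by vco; lra.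
have phi_emb w : phi (emb w) = (0, w).
  have -> : emb w = comb u (Jv u) v (Jv v) (w 0 j0) 0 (w 0 j1) 0.
    by rewrite /emb /comb !scale0r !addr0.
  rewrite /phi /gg (g_comb0 Hind) (g_comb1 Hind) (g_comb2 Hind) (g_comb3 Hind).
  by rewrite mk2_0 -rV2E.
exists phi; split.
- move=> a t t'; rewrite /phi; apply: peqm => /=; rewrite mk2_lin !mk2E0 !mk2E1 /gg !(gD, gZ) //.
- case=> a b; exists (emb b + Jv (emb a)).
  have -> : emb b + Jv (emb a) = comb u (Jv u) v (Jv v) (b 0 j0) (a 0 j0) (b 0 j1) (a 0 j1).
    rewrite /emb /comb; expand; by vco; lra.
  rewrite /phi /gg (g_comb0 Hind) (g_comb1 Hind) (g_comb2 Hind) (g_comb3 Hind).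
  by rewrite -!rV2E.
- move=> t; split.
    rewrite /phi => H; move: (congr1 fst H) (congr1 snd H) => /=.
    rewrite -mk2_0 => /mk2_inj [e1 e3] /mk2_inj [e0 e2] y.
    by rewrite (decomp Hind t) -/gg e0 e1 e2 e3 /comb !scale0r !addr0 br0l.
  move=> /Hcl ->; rewrite /phi /gg !g0 mk2_0 //.
- move=> t t'.
  rewrite {1}(tE t) {1}(tE t'); set a := (phi t).1; set b := (phi t).2;
    set a' := (phi t').1; set b' := (phi t').2.
  rewrite brDl (brDr (emb b)) (brDr (Jv (emb a))) embUV embJJ add0r addr0.
  rewrite (brC (emb b)) -!emb_mul.
  have -> : - emb (mul a' b) + emb (mul a b') = emb (mul a b' - mul a' b).
    rewrite /emb !mxE; by vco; lra.
  by rewrite phi_emb /aff_bracket.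
Qed.

Lemma exists_out (a b : V) : exists x, ~ span2 a b x.
Proof.
apply: NNPP => H.
have Hall x : span2 a b x by apply: NNPP => Hx; apply: H; exists x.
have : ((1%:M : 'M[R]_4) <= col_mx a b)%MS.
  apply/row_subP => i; have [al [be ->]] := Hall (row i 1%:M).
  apply/submxP; exists (row_mx (al%:M) (be%:M)).
  by rewrite mul_row_col !mul_scalar_mx.
move/mxrankS; rewrite mxrank1 => h.
by have := leq_trans h (rank_leq_row _).
Qed.

Section BasisF.
Variables b0 b1 b2 b3 : V.
Hypothesis Hind : indep b0 b1 b2 b3.
Lemma gb0 i : g b0 b1 b2 b3 i b0 = mk4 1 0 0 0 0 i.
Proof. by rewrite -(co_comb Hind) /comb scale1r !scale0r !addr0. Qed.
Lemma gb1 i : g b0 b1 b2 b3 i b1 = mk4 0 1 0 0 0 i.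
Proof. by rewrite -(co_comb Hind) /comb scale1r !scale0r add0r !addr0. Qed.
Lemma gb2 i : g b0 b1 b2 b3 i b2 = mk4 0 0 1 0 0 i.
Proof. by rewrite -(co_comb Hind) /comb scale1r !scale0r !add0r addr0. Qed.
Lemma gb3 i : g b0 b1 b2 b3 i b3 = mk4 0 0 0 1 0 i.
Proof. by rewrite -(co_comb Hind) /comb scale1r !scale0r !add0r. Qed.
Lemma combD a0 a1 a2 a3 c0 c1 c2 c3 : comb b0 b1 b2 b3 a0 a1 a2 a3 + comb b0 b1 b2 b3 c0 c1 c2 c3
  = comb b0 b1 b2 b3 (a0 + c0) (a1 + c1) (a2 + c2) (a3 + c3).
Proof. by rewrite /comb; vco; lra. Qed.
Lemma combZ kk a0 a1 a2 a3 : kk *: comb b0 b1 b2 b3 a0 a1 a2 a3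
  = comb b0 b1 b2 b3 (kk * a0) (kk * a1) (kk * a2) (kk * a3).
Proof. by rewrite /comb; vco; lra. Qed.
Lemma br_comb a0 a1 a2 a3 c0 c1 c2 c3 :
  br (comb b0 b1 b2 b3 a0 a1 a2 a3) (comb b0 b1 b2 b3 c0 c1 c2 c3) =
  (a0 * c0) *: br b0 b0 + (a0 * c1) *: br b0 b1 + (a0 * c2) *: br b0 b2 + (a0 * c3) *: br b0 b3 +
  (a1 * c0) *: br b1 b0 + (a1 * c1) *: br b1 b1 + (a1 * c2) *: br b1 b2 + (a1 * c3) *: br b1 b3 +
  (a2 * c0) *: br b2 b0 + (a2 * c1) *: br b2 b1 + (a2 * c2) *: br b2 b2 + (a2 * c3) *: br b2 b3 +
  (a3 * c0) *: br b3 b0 + (a3 * c1) *: br b3 b1 + (a3 * c2) *: br b3 b2 + (a3 * c3) *: br b3 b3.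
Proof.
rewrite /comb !brDl !brDr !brZl !brZr !scalerA.
by vco; lra.
Qed.
Lemma zero_coords t : g b0 b1 b2 b3 i0 t = 0 -> g b0 b1 b2 b3 i1 t = 0 ->
  g b0 b1 b2 b3 i2 t = 0 -> g b0 b1 b2 b3 i3 t = 0 -> t = 0.
Proof.
move=> h0 h1 h2 h3; rewrite (decomp Hind t) h0 h1 h2 h3 /comb !scale0r.
by rewrite !addr0.
Qed.
End BasisF.

Lemma typeII_nonab u x : centerless -> u != 0 -> (exists a b, u = br a b) ->
  (forall a b, span2 u (Jv u) (br a b)) -> ~ span2 u (Jv u) x -> br u (Jv u) != 0 -> False.
Proof.
move=> Hcl u0 [x0 [y0 Eu]] Hsp Hx Pn0.
have ito_u a b : br u (br a b) = 0 by rewrite Eu ito.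
have Su : span2 u (Jv u) u by exists 1, 0; rewrite scale1r scale0r addr0.
have Hind := indep4 (closed_spanJ u) Su u0 Hx.
have [p1 [p2 EP]] := Hsp u (Jv u).
have onlyu a b : exists r, br a b = r *: u.
  have [w1 [w2 Ew]] := Hsp a b; exists w1.
  have Hw : w2 *: br u (Jv u) = 0.
    have := ito_u a b; rewrite Ew brDr !brZr brxx scaler0 add0r => ->.
    by [].
  move/eqP: Hw; rewrite scaler_eq0 (negbTE Pn0) orbF => /eqP w20.
  by rewrite Ew w20 scale0r addr0.
have [p EP'] := onlyu u (Jv u).
have [q Eq] := onlyu x (Jv x); have [r Er] := onlyu u x; have [s Es] := onlyu u (Jv x).
have Exu : br x u = - (r *: u) by rewrite brC Er.
have ExJu : br x (Jv u) = s *: u by rewrite F1' Es.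
have p0 : p != 0 by apply: contra_neq Pn0 => p0; rewrite EP' p0 scale0r.
have J1 := jac (Jv u) x (Jv x).
move: J1. do 4 (expand; rewrite ?(brxx, EP', Eq, Er, Es, Exu, ExJu)). move=> J1.
move: (congr1 (g u (Jv u) x (Jv x) i0) J1).
rewrite !(gD, gZ, gN, gB, g0) !(gb0 Hind, gb1 Hind) !mxE /= => e.
pose k := (- s) *: u + (- r) *: Jv u + p *: x.
have Hk : lie_center br k.
  apply: (central_basis Hind); rewrite /k;
  do 4 (expand; rewrite ?(brxx, EP', Eq, Er, Es, Exu, ExJu));
  apply: (zero_coords Hind);
  rewrite !(gD, gZ, gN, gB, g0) ?(gb0 Hind, gb1 Hind, gb2 Hind, gb3 Hind) !mxE /=; lra.
have := congr1 (g u (Jv u) x (Jv x) i2) (Hcl k Hk).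
rewrite /k !(gD, gZ, gN, gB, g0) ?(gb0 Hind, gb1 Hind, gb2 Hind, gb3 Hind) !mxE /= => ep.
by move/eqP: p0; apply; lra.
Qed.

Lemma typeII_ab u x : centerless -> u != 0 -> (exists a b, u = br a b) ->
  (forall a b, span2 u (Jv u) (br a b)) -> ~ span2 u (Jv u) x -> br u (Jv u) = 0 -> concl.
Proof.
move=> Hcl u0 [x0 [y0 Eu]] Hsp Hx P0.
have Su : span2 u (Jv u) u by exists 1, 0; rewrite scale1r scale0r addr0.
have Hind := indep4 (closed_spanJ u) Su u0 Hx.
have [d1 [d2 E1]] := Hsp x u; have [d3 [d4 E2]] := Hsp x (Jv u).
have [q1 [q2 EQ]] := Hsp x (Jv x).
have Eux : br u x = - (d1 *: u + d2 *: Jv u) by rewrite brC E1.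
have EuJx : br u (Jv x) = d3 *: u + d4 *: Jv u by rewrite F1' E2.
have J1 := jac x (Jv x) u; have J2 := jac x (Jv x) (Jv u).
move: J1 J2. do 4 (expand; rewrite ?(brxx, P0, E1, E2, EQ, Eux, EuJx)). move=> J1 J2.
move: (congr1 (g u (Jv u) x (Jv x) i0) J1) (congr1 (g u (Jv u) x (Jv x) i1) J1)
      (congr1 (g u (Jv u) x (Jv x) i0) J2) (congr1 (g u (Jv u) x (Jv x) i1) J2).
rewrite !(gD, gZ, gN, gB, g0) ?(gb0 Hind, gb1 Hind, gb2 Hind, gb3 Hind) !mxE /= => e1 e2 e3 e4.
have [h14 h23] : d1 - d4 = 0 /\ d2 + d3 = 0 by apply: sq0; lra.
have d4E : d4 = d1 by lra.
have d3E : d3 = - d2 by lra.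
rewrite d4E d3E in E2 EuJx.
have L0 : d1 ^+ 2 + d2 ^+ 2 != 0.
  apply/eqP => L0; have [f1 f2] := sq0 L0.
  have Hu : lie_center br u.
    apply: (central_basis Hind);
    do 4 (expand; rewrite ?(brxx, P0, E1, E2, EQ, Eux, EuJx));
    apply: (zero_coords Hind);
    rewrite ?(gD, gZ, gN, gB, g0) ?(gb0 Hind, gb1 Hind, gb2 Hind, gb3 Hind) ?mxE /=;
    rewrite ?f1 ?f2; lra.
  by move/eqP: u0; apply; apply: Hcl.
set L := d1 ^+ 2 + d2 ^+ 2.
have two0 : (2 : R) != 0 by rewrite pnatr_eq0.
set n1 := (q1 * d2 - q2 * d1) / (2 * L); set n2 := (q1 * d1 + q2 * d2) / (2 * L).
pose gg := g u (Jv u) x (Jv x).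
pose phi t := (mk2 (d1 * gg i2 t + d2 * gg i3 t) (d2 * gg i2 t - d1 * gg i3 t),
               mk2 (gg i0 t - gg i2 t * n1 + gg i3 t * n2) (gg i1 t - gg i2 t * n2 - gg i3 t * n1)).
pose mul (p q : 'rV[R]_2) :=
  mk2 (p 0 j0 * q 0 j0 - p 0 j1 * q 0 j1) (p 0 j0 * q 0 j1 + p 0 j1 * q 0 j0).
exists 2%N, mul; split.
  split; [split|split] => *; rewrite /mul; apply/rowP => j; rewrite !mxE;
    case: j => [[|[|m]] Hj] //=; rewrite ?mxE /=; ring.
exists phi; split.
- move=> a t t'; apply: peqm; rewrite /= mk2_lin !mk2E0 !mk2E1 /gg !(gD, gZ);
    congr mk2; ring.
- case=> A B.
  exists (comb u (Jv u) x (Jv x)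
    (B 0 j0 + (A 0 j0 * d1 + A 0 j1 * d2) / L * n1 - (A 0 j0 * d2 - A 0 j1 * d1) / L * n2)
    (B 0 j1 + (A 0 j0 * d1 + A 0 j1 * d2) / L * n2 + (A 0 j0 * d2 - A 0 j1 * d1) / L * n1)
    ((A 0 j0 * d1 + A 0 j1 * d2) / L) ((A 0 j0 * d2 - A 0 j1 * d1) / L)).
  rewrite /phi /gg (g_comb0 Hind) (g_comb1 Hind) (g_comb2 Hind) (g_comb3 Hind).
  apply: peqm => /=; [rewrite [A]rV2E | rewrite [B]rV2E]; congr mk2; rewrite ?mk2E0 ?mk2E1 /L; field; done.
- move=> t; split.
    rewrite /phi => H; move: (congr1 fst H) (congr1 snd H) => /=.
    rewrite -mk2_0 => /mk2_inj [e5 e6] /mk2_inj [e7 e8].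
    have G2 : gg i2 t * L = d1 * (d1 * gg i2 t + d2 * gg i3 t) + d2 * (d2 * gg i2 t - d1 * gg i3 t).
      by rewrite /L; ring.
    have G3 : gg i3 t * L = d2 * (d1 * gg i2 t + d2 * gg i3 t) - d1 * (d2 * gg i2 t - d1 * gg i3 t).
      by rewrite /L; ring.
    rewrite e5 e6 !mulr0 subrr addr0 in G2 G3.
    move/eqP: G2; rewrite mulf_eq0 (negbTE L0) orbF => /eqP G2.
    move/eqP: G3; rewrite mulf_eq0 (negbTE L0) orbF => /eqP G3.
    rewrite G2 G3 !mul0r !subr0 !addr0 in e7 e8.
    have -> : t = 0 by apply: (zero_coords Hind).
    by move=> y; rewrite br0l.
  move=> /Hcl ->; rewrite /phi /gg !g0; apply: peqm; rewrite /= -mk2_0; congr mk2; ring.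
- move=> t t'; rewrite (decomp Hind t) (decomp Hind t').
  move: (g _ _ _ _ i0 t) (g _ _ _ _ i1 t) (g _ _ _ _ i2 t) (g _ _ _ _ i3 t)
        (g _ _ _ _ i0 t') (g _ _ _ _ i1 t') (g _ _ _ _ i2 t') (g _ _ _ _ i3 t')
    => a0 a1 a2 a3 b0 b1 b2 b3.
  have T00 : br u u = comb u (Jv u) x (Jv x) 0 0 0 0 by rewrite /comb; expand; rewrite ?(brxx, P0, E1, E2, EQ, Eux, EuJx); expand; vco; lra.
  have T01 : br u (Jv u) = comb u (Jv u) x (Jv x) 0 0 0 0 by rewrite /comb; expand; rewrite ?(brxx, P0, E1, E2, EQ, Eux, EuJx); expand; vco; lra.
  have T02 : br u x = comb u (Jv u) x (Jv x) (- d1) (- d2) 0 0 by rewrite /comb; expand; rewrite ?(brxx, P0, E1, E2, EQ, Eux, EuJx); expand; vco; lra.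
  have T03 : br u (Jv x) = comb u (Jv u) x (Jv x) (- d2) d1 0 0 by rewrite /comb; expand; rewrite ?(brxx, P0, E1, E2, EQ, Eux, EuJx); expand; vco; lra.
  have T10 : br (Jv u) u = comb u (Jv u) x (Jv x) 0 0 0 0 by rewrite /comb; expand; rewrite ?(brxx, P0, E1, E2, EQ, Eux, EuJx); expand; vco; lra.
  have T11 : br (Jv u) (Jv u) = comb u (Jv u) x (Jv x) 0 0 0 0 by rewrite /comb; expand; rewrite ?(brxx, P0, E1, E2, EQ, Eux, EuJx); expand; vco; lra.
  have T12 : br (Jv u) x = comb u (Jv u) x (Jv x) d2 (- d1) 0 0 by rewrite /comb; expand; rewrite ?(brxx, P0, E1, E2, EQ, Eux, EuJx); expand; vco; lra.
  have T13 : br (Jv u) (Jv x) = comb u (Jv u) x (Jv x) (- d1) (- d2) 0 0 by rewrite /comb; expand; rewrite ?(brxx, P0, E1, E2, EQ, Eux, EuJx); expand; vco; lra.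
  have T20 : br x u = comb u (Jv u) x (Jv x) d1 d2 0 0 by rewrite /comb; expand; rewrite ?(brxx, P0, E1, E2, EQ, Eux, EuJx); expand; vco; lra.
  have T21 : br x (Jv u) = comb u (Jv u) x (Jv x) (- d2) d1 0 0 by rewrite /comb; expand; rewrite ?(brxx, P0, E1, E2, EQ, Eux, EuJx); expand; vco; lra.
  have T22 : br x x = comb u (Jv u) x (Jv x) 0 0 0 0 by rewrite /comb; expand; rewrite ?(brxx, P0, E1, E2, EQ, Eux, EuJx); expand; vco; lra.
  have T23 : br x (Jv x) = comb u (Jv u) x (Jv x) q1 q2 0 0 by rewrite /comb; expand; rewrite ?(brxx, P0, E1, E2, EQ, Eux, EuJx); expand; vco; lra.
  have T30 : br (Jv x) u = comb u (Jv u) x (Jv x) d2 (- d1) 0 0 by rewrite /comb; expand; rewrite ?(brxx, P0, E1, E2, EQ, Eux, EuJx); expand; vco; lra.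
  have T31 : br (Jv x) (Jv u) = comb u (Jv u) x (Jv x) d1 d2 0 0 by rewrite /comb; expand; rewrite ?(brxx, P0, E1, E2, EQ, Eux, EuJx); expand; vco; lra.
  have T32 : br (Jv x) x = comb u (Jv u) x (Jv x) (- q1) (- q2) 0 0 by rewrite /comb; expand; rewrite ?(brxx, P0, E1, E2, EQ, Eux, EuJx); expand; vco; lra.
  have T33 : br (Jv x) (Jv x) = comb u (Jv u) x (Jv x) 0 0 0 0 by rewrite /comb; expand; rewrite ?(brxx, P0, E1, E2, EQ, Eux, EuJx); expand; vco; lra.
  rewrite br_comb T00 T01 T02 T03 T10 T11 T12 T13 T20 T21 T22 T23 T30 T31 T32 T33.
  rewrite !combZ !combD.
  rewrite /phi /aff_bracket /gg /mul !(g_comb0 Hind, g_comb1 Hind, g_comb2 Hind, g_comb3 Hind) !mxE /=.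
  apply: peqm; rewrite /= ?mk2B -?mk2_0; congr mk2; rewrite /n1 /n2 /L; field; done.
Qed.

Lemma main_concl : concl.
Proof.
case: (classic (exists x y, br x y != 0)) => [[x0 [y0 H0]] | Hab]; last first.
  apply: caseA => x y; case: (eqVneq (br x y) 0) => // h.
  by exfalso; apply: Hab; exists x, y.
case: (classic (exists c, c != 0 /\ lie_center br c)) => [[c [c0 Hc]] | Hcl].
  apply: (caseB c0 Hc (x := x0)) => h.
  by move: H0; rewrite h eqxx.
have Hcl' : centerless.
  move=> t Ht; case: (eqVneq t 0) => // tn.
  by exfalso; apply: Hcl; exists t.
have Eu : exists a b, br x0 y0 = br a b by exists x0, y0.
case: (classic (exists a b, ~ span2 (br x0 y0) (Jv (br x0 y0)) (br a b))) =>
    [[a [b Hab]] | Hsp].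
  by apply: (typeI Hcl' H0 Hab Eu); exists a, b.
have Hsp' a b : span2 (br x0 y0) (Jv (br x0 y0)) (br a b).
  by apply: NNPP => h; apply: Hsp; exists a, b.
have [x Hx] := exists_out (br x0 y0) (Jv (br x0 y0)).
case: (eqVneq (br (br x0 y0) (Jv (br x0 y0))) 0) => [P0 | Pn0].
  exact: (typeII_ab Hcl' H0 Eu Hsp' Hx P0).
by exfalso; exact: (typeII_nonab Hcl' H0 Eu Hsp' Hx Pn0).
Qed.

End Main.

Theorem mainTheorem11 (R : realType) (br : 'rV[R]_4 -> 'rV[R]_4 -> 'rV[R]_4) :
  is_lie_bracket br ->
  (exists J : 'M[R]_4, abelian_complex_structure br J) ->
  exists (m : nat) (mul : 'rV[R]_m -> 'rV[R]_m -> 'rV[R]_m),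
    comm_assoc_algebra mul /\ quotient_by_center_iso_aff br mul.
Proof.
move=> Hl [J HJ]; exact: (main_concl Hl HJ).
Qed.
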